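(* Let $n\ge2$, $q^{\min}=\bar q_0(\{1,2\})$ and $q^{\max}=\bar q_0(\{1\})$. With $v_1(q)=V(qe^{\theta_1-1})$, the function $$R(q)=\frac{v_1(q)}{1-v_1(q)}+\frac{1}{q+v_1(q)}-1$$ is quasi-convex on $[q^{\min},q^{\max}]$, with no restriction on the value of $v_1$.
   Context: Sellers $\mathbb{S}=\{1,\dots,n\}$ with qualities $\theta_1\ge\dots\ge\theta_n\ge0$. $V:(0,\infty)\to(0,1)$: $V(x)=$ the unique $v\in(0,1)$ with $v\exp(v/(1-v))=x$. For nonempty $T\subseteq\mathbb{S}$, $\bar q_0(T)\in(0,1)$ is the unique solution of $\sum_{i\in T}V(\bar q_0e^{\theta_i-1})=1-\bar q_0$. A function $f$ on an interval is quasi-convex if $f(\lambda x+(1-\lambda)y)\le\max\{f(x),f(y)\}$ for all $x,y$ in the interval and $\lambda\in[0,1]$. *)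

(* Defs.v *)
From Stdlib Require Import Reals Lra List ClassicalEpsilon.
Open Scope R_scope.

Definition V_spec (x v : R) : Prop := 0 < v < 1 /\ v * exp (v / (1 - v)) = x.
Definition V (x : R) : R := epsilon (inhabits 0) (fun v => V_spec x v).

(* Sellers are indexed by naturals 1..n, qualities theta : nat -> R.
   A subset T of sellers is given as a list of indices.
   qbar0 theta T = the unique q in (0,1) with
     sum_{i in T} V(q e^{theta_i - 1}) = 1 - q. *)
Definition sumV (theta : nat -> R) (T : list nat) (q : R) : R :=
  fold_right (fun i acc => V (q * exp (theta i - 1)) + acc) 0 T.
Definition qbar0_spec (theta : nat -> R) (T : list nat) (q : R) : Prop :=
  0 < q < 1 /\ sumV theta T q = 1 - q.
Definition qbar0 (theta : nat -> R) (T : list nat) : R :=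
  epsilon (inhabits 0) (fun q => qbar0_spec theta T q).

Definition quasi_convex_on (f : R -> R) (a b : R) : Prop :=
  forall x y lam, a <= x <= b -> a <= y <= b -> 0 <= lam <= 1 ->
    f (lam * x + (1 - lam) * y) <= Rmax (f x) (f y).

Definition v1 (theta : nat -> R) (q : R) : R := V (q * exp (theta 1%nat - 1)).
Definition Rfun (theta : nat -> R) (q : R) : R :=
  v1 theta q / (1 - v1 theta q) + 1 / (q + v1 theta q) - 1.

(* Main.v *)
Require Import Defs.
From Stdlib Require Import Reals Lra List ClassicalEpsilon Ranalysis5.
From Coquelicot Require Import Coquelicot.
Open Scope R_scope.

Definition hh (v : R) : R := v * exp (v / (1 - v)).

Lemma hh_lt : forall a b, 0 < a -> a < b -> b < 1 -> hh a < hh b.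
Proof.
  intros a b Ha Hab Hb. unfold hh.
  assert (a / (1 - a) < b / (1 - b)).
  { apply Rminus_gt_0_lt. unfold Rdiv.
    replace (b * / (1 - b) - a * / (1 - a)) with ((b - a) / ((1-a)*(1-b))) by (field; lra).
    apply Rdiv_lt_0_compat; nra. }
  apply exp_increasing in H.
  assert (0 < exp (a / (1-a))) by apply exp_pos. nra.
Qed.

Lemma hh_pos : forall a, 0 < a -> a < 1 -> 0 < hh a.
Proof. intros. unfold hh. assert (0 < exp (a/(1-a))) by apply exp_pos. nra. Qed.

Lemma hh_big : forall x, 0 < x -> x < hh ((x+1)/(x+2)).
Proof.
  intros x Hx. unfold hh.
  replace ((x + 1) / (x + 2) / (1 - (x + 1) / (x + 2))) with (x+1) by (field; lra).
  assert (1 + (x+1) < exp (x+1)) by (apply exp_ineq1; lra).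
  assert (0 < (x+1)/(x+2)) by (apply Rdiv_lt_0_compat; lra).
  assert ((x + 1) / (x + 2) * (x+2) = x+1) by (field; lra).
  nra.
Qed.

Lemma hh_cont : forall a, a < 1 -> continuity_pt hh a.
Proof.
  intros a Ha. apply derivable_continuous_pt.
  exists (Derive hh a). apply is_derive_Reals.
  apply Derive_correct. unfold hh. auto_derive. lra.
Qed.

Lemma V_ex : forall x, 0 < x -> V_spec x (V x).
Proof.
  intros x Hx. unfold V. apply epsilon_spec.
  set (b := (x+1)/(x+2)).
  assert (Hb0 : 0 < b) by (unfold b; apply Rdiv_lt_0_compat; lra).
  assert (Hb1 : b < 1) by (unfold b; apply Rmult_lt_reg_r with (x+2); [lra|];
     unfold Rdiv; rewrite Rmult_assoc, Rinv_l; lra).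
  destruct (IVT_interv (fun v => hh v - x) 0 b) as [z [Hz1 Hz2]].
  - intros a Ha. apply continuity_pt_minus. apply hh_cont; lra. apply continuity_pt_const. intros ? ?; auto.
  - lra.
  - unfold hh. rewrite Rmult_0_l. lra.
  - pose proof (hh_big x Hx). fold b in H. lra.
  - exists z. unfold V_spec. assert (z <> 0). { intro; subst. unfold hh in Hz2. lra. }
    split; [lra|]. unfold hh in Hz2. lra.
Qed.

Lemma V_hh : forall x, 0 < x -> hh (V x) = x /\ 0 < V x < 1.
Proof. intros x Hx. destruct (V_ex x Hx) as [H1 H2]. split; auto. Qed.

Lemma V_le : forall x y, 0 < x -> x <= y -> V x <= V y.
Proof.
  intros x y Hx Hxy. destruct (V_hh x Hx) as [E1 B1]. destruct (V_hh y ltac:(lra)) as [E2 B2].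
  destruct (Rle_or_lt (V x) (V y)) as [|H]; auto.
  pose proof (hh_lt (V y) (V x) ltac:(lra) H ltac:(lra)). lra.
Qed.

Lemma V_lt_of : forall x w, 0 < x -> 0 < w < 1 -> x < hh w -> V x < w.
Proof.
  intros x w Hx Hw H. destruct (V_hh x Hx) as [E1 B1].
  destruct (Rlt_or_le (V x) w) as [|H2]; auto.
  destruct H2 as [H2|H2]. pose proof (hh_lt w (V x) ltac:(lra) H2 ltac:(lra)). lra.
  subst. lra.
Qed.

Lemma V_gt_of : forall x w, 0 < x -> 0 < w < 1 -> hh w < x -> w < V x.
Proof.
  intros x w Hx Hw H. destruct (V_hh x Hx) as [E1 B1].
  destruct (Rlt_or_le w (V x)) as [|H2]; auto.
  destruct H2 as [H2|H2]. pose proof (hh_lt (V x) w ltac:(lra) H2 ltac:(lra)). lra.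
  subst. lra.
Qed.

Lemma V_cont : forall x0, 0 < x0 -> continuity_pt V x0.
Proof.
  intros x0 Hx0. destruct (V_hh x0 Hx0) as [E0 B0].
  unfold continuity_pt, continue_in, limit1_in, limit_in. simpl. unfold R_dist.
  intros eps He.
  set (e := Rmin (eps/2) (Rmin (V x0 / 2) ((1 - V x0)/2))).
  assert (He1 : 0 < e) by (unfold e; repeat apply Rmin_pos; lra).
  assert (He2 : e <= eps/2) by apply Rmin_l.
  assert (He3 : e <= V x0/2) by (unfold e; eapply Rle_trans; [apply Rmin_r|apply Rmin_l]).
  assert (He4 : e <= (1 - V x0)/2) by (unfold e; eapply Rle_trans; [apply Rmin_r|apply Rmin_r]).
  pose proof (hh_lt (V x0 - e) (V x0) ltac:(lra) ltac:(lra) ltac:(lra)) as L1.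
  pose proof (hh_lt (V x0) (V x0 + e) ltac:(lra) ltac:(lra) ltac:(lra)) as L2.
  pose proof (hh_pos (V x0 - e) ltac:(lra) ltac:(lra)) as L3.
  rewrite E0 in L1, L2.
  exists (Rmin (x0 - hh (V x0 - e)) (hh (V x0 + e) - x0)). split.
  - apply Rmin_pos; lra.
  - intros x [_ Hx]. 
    pose proof (Rmin_l (x0 - hh (V x0 - e)) (hh (V x0 + e) - x0)).
    pose proof (Rmin_r (x0 - hh (V x0 - e)) (hh (V x0 + e) - x0)).
    apply Rabs_def2 in Hx. destruct Hx.
    assert (0 < x) by lra.
    pose proof (V_gt_of x (V x0 - e) H3 ltac:(lra) ltac:(lra)).
    pose proof (V_lt_of x (V x0 + e) H3 ltac:(lra) ltac:(lra)).
    apply Rabs_def1; lra.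
Qed.

Lemma qbar0_pos (theta : nat -> R) : 0 < qbar0 theta (1 :: 2 :: nil)%nat.
Proof.
  assert (qbar0_spec theta (1 :: 2 :: nil)%nat (qbar0 theta (1 :: 2 :: nil)%nat)).
  2:{ destruct H; lra. }
  unfold qbar0. apply epsilon_spec.
  set (A := exp (theta 1%nat - 1)). set (B := exp (theta 2%nat - 1)).
  assert (HA : 0 < A) by apply exp_pos. assert (HB : 0 < B) by apply exp_pos.
  set (F := fun q => V (q * A) + V (q * B) + q - 1).
  assert (Hh : 0 < hh (1/3)) by (apply hh_pos; lra).
  set (q0 := Rmin (1/4) (Rmin (hh (1/3) / (2*A)) (hh (1/3)/(2*B)))).
  assert (Q0 : 0 < q0) by (unfold q0; repeat apply Rmin_pos; try apply Rdiv_lt_0_compat; lra).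
  assert (Q1 : q0 <= 1/4) by apply Rmin_l.
  assert (Q2 : q0 <= hh (1/3)/(2*A)) by (unfold q0; eapply Rle_trans; [apply Rmin_r|apply Rmin_l]).
  assert (Q3 : q0 <= hh (1/3)/(2*B)) by (unfold q0; eapply Rle_trans; [apply Rmin_r|apply Rmin_r]).
  destruct (IVT_interv F q0 1) as [z [Hz1 Hz2]].
  - intros a Ha. unfold F. apply continuity_pt_minus; [|apply continuity_pt_const; intros ? ?; auto].
    apply continuity_pt_plus; [|apply continuity_pt_id].
    apply continuity_pt_plus.
    + apply (continuity_pt_comp (fun q => q * A) V). 
      apply continuity_pt_mult; [apply continuity_pt_id|apply continuity_pt_const; intros ? ?; auto].
      apply V_cont. nra.
    + apply (continuity_pt_comp (fun q => q * B) V). 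
      apply continuity_pt_mult; [apply continuity_pt_id|apply continuity_pt_const; intros ? ?; auto].
      apply V_cont. nra.
  - lra.
  - unfold F.
    assert (q0 * A < hh (1/3)).
    { apply Rle_lt_trans with (hh (1/3) / (2*A) * A). apply Rmult_le_compat_r; lra.
      replace (hh (1/3) / (2*A) * A) with (hh (1/3) / 2) by (field; lra). lra. }
    assert (q0 * B < hh (1/3)).
    { apply Rle_lt_trans with (hh (1/3) / (2*B) * B). apply Rmult_le_compat_r; lra.
      replace (hh (1/3) / (2*B) * B) with (hh (1/3) / 2) by (field; lra). lra. }
    pose proof (V_lt_of (q0*A) (1/3) ltac:(nra) ltac:(lra) H).
    pose proof (V_lt_of (q0*B) (1/3) ltac:(nra) ltac:(lra) H0). lra.
  - unfold F. destruct (V_hh (1*A) ltac:(lra)). destruct (V_hh (1*B) ltac:(lra)). lra.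
  - exists z. unfold F in Hz2. unfold qbar0_spec, sumV. simpl.
    destruct (V_hh (z*A) ltac:(nra)). destruct (V_hh (z*B) ltac:(nra)).
    split; [split; lra|]. fold A B. lra.
Qed.

Definition SS (c u : R) : R := u + (1+u)/(u*(1+c*exp u)) - 1.
Definition GG (c u : R) : R := (u^2-1) + c*exp u*(u^2-u-1) + (c*exp u)^2*u^2.
Definition HH (k u : R) : R := u^2 + k*exp(-u)*(u^2-u-1) + (k*exp(-u))^2*(u^2-1).
Definition HH' (k u : R) : R := 2*u + k*exp(-u)*(3*u-u^2) + (k*exp(-u))^2*(2+2*u-2*u^2).

Lemma HH_der : forall k u, derivable_pt_lim (HH k) u (HH' k u).
Proof.
  intros. apply is_derive_Reals. unfold HH, HH'. auto_derive; auto. ring.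
Qed.

Lemma HH_incr : forall k u1 u2, 0 < k -> 0 < u1 -> u1 < u2 -> u2^2 < u2 + 1 -> HH k u1 < HH k u2.
Proof.
  intros k u1 u2 Hk H1 H12 H2.
  destruct (MVT_cor2 (HH k) (HH' k) u1 u2 H12 (fun c _ => HH_der k c)) as [p [Hp1 Hp2]].
  assert (0 < HH' k p).
  { unfold HH'. assert (0 < k * exp (-p)) by (apply Rmult_lt_0_compat; [lra|apply exp_pos]).
    set (t := k * exp (-p)) in *.
    assert (p^2 < p + 1) by (destruct (Rle_or_lt 1 (p + u2)); nra).
    assert (0 < 3*p - p^2) by nra. assert (0 < 2 + 2*p - 2*p^2) by nra.
    assert (0 < t * (3*p-p^2)) by nra. assert (0 < t^2 * (2 + 2*p - 2*p^2)) by (apply Rmult_lt_0_compat; [apply pow_lt|]; lra). lra. }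
  nra.
Qed.

Lemma GG_HH : forall c u, 0 < c -> GG c u = (c * exp u)^2 * HH (/c) u.
Proof.
  intros. unfold GG, HH. rewrite exp_Ropp.
  assert (exp u <> 0) by (apply Rgt_not_eq, exp_pos). field. split; lra.
Qed.

Lemma GG_up : forall c u1 u2, 0 < c -> 0 < u1 -> u1 < u2 -> 0 < GG c u1 -> 0 < GG c u2.
Proof.
  intros c u1 u2 Hc H1 H12 HG.
  assert (Hw : 0 < c * exp u2) by (apply Rmult_lt_0_compat; [lra|apply exp_pos]).
  destruct (Rlt_or_le (u2^2) (u2+1)) as [Hs|Hs].
  - rewrite GG_HH in * by lra.
    assert (0 < (c*exp u1)^2) by (apply pow_lt, Rmult_lt_0_compat; [lra|apply exp_pos]).
    assert (0 < HH (/c) u1).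
    { destruct (Rlt_or_le 0 (HH (/c) u1)); auto. nra. }
    pose proof (HH_incr (/c) u1 u2 ltac:(apply Rinv_0_lt_compat; lra) H1 H12 Hs).
    apply Rmult_lt_0_compat. apply pow_lt; lra. lra.
  - unfold GG. set (w := c * exp u2) in *. nra.
Qed.

Definition SS' (c u : R) : R := GG c u / (u^2 * (1 + c*exp u)^2).

Lemma SS_der : forall c u, 0 < c -> 0 < u -> derivable_pt_lim (SS c) u (SS' c u).
Proof.
  intros c u Hc Hu. apply is_derive_Reals. unfold SS, SS', GG.
  assert (0 < exp u) by apply exp_pos.
  assert (0 < c * exp u) by nra.
  auto_derive. repeat split; try nra; auto.
  field. split; nra.
Qed.

Lemma SS_qc : forall c u1 um u2, 0 < c -> 0 < u1 -> u1 <= um -> um <= u2 ->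
  SS c um <= Rmax (SS c u1) (SS c u2).
Proof.
  intros c u1 um u2 Hc H1 H1m Hm2.
  destruct (Rle_or_lt (SS c um) (Rmax (SS c u1) (SS c u2))) as [|Hc2]; auto. exfalso.
  pose proof (Rmax_l (SS c u1) (SS c u2)). pose proof (Rmax_r (SS c u1) (SS c u2)).
  destruct H1m as [H1m|H1m]; [|subst; lra].
  destruct Hm2 as [Hm2|Hm2]; [|subst; lra].
  destruct (MVT_cor2 (SS c) (SS' c) u1 um H1m (fun p Hp => SS_der c p Hc ltac:(lra))) as [p1 [E1 P1]].
  destruct (MVT_cor2 (SS c) (SS' c) um u2 Hm2 (fun p Hp => SS_der c p Hc ltac:(lra))) as [p2 [E2 P2]].
  assert (D : forall p, 0 < p -> 0 < p^2 * (1 + c*exp p)^2).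
  { intros p Hp. assert (0 < exp p) by apply exp_pos. assert (0 < c * exp p) by nra.
    apply Rmult_lt_0_compat; apply pow_lt; nra. }
  assert (0 < SS' c p1).
  { destruct (Rlt_or_le 0 (SS' c p1)); auto. nra. }
  assert (0 < GG c p1).
  { unfold SS' in H2. pose proof (D p1 ltac:(lra)).
    assert (GG c p1 = SS' c p1 * (p1 ^ 2 * (1 + c * exp p1) ^ 2)) by (unfold SS', Rdiv; rewrite Rmult_assoc, Rinv_l, Rmult_1_r; lra).
    rewrite H4. nra. }
  pose proof (GG_up c p1 p2 Hc ltac:(lra) ltac:(lra) H3).
  assert (0 < SS' c p2) by (unfold SS'; apply Rdiv_lt_0_compat; auto; apply D; lra).
  nra.
Qed.

Definition UU (theta : nat -> R) (q : R) : R :=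
  v1 theta q / (1 - v1 theta q).

Lemma Rfun_SS : forall theta q, 0 < q ->
  Rfun theta q = SS (exp (1 - theta 1%nat)) (UU theta q).
Proof.
  intros theta q Hq. unfold Rfun, UU, SS.
  set (E := exp (theta 1%nat - 1)). set (c := exp (1 - theta 1%nat)).
  assert (HE : 0 < E) by apply exp_pos.
  assert (cE : c * E = 1).
  { unfold c, E. rewrite <- exp_plus. replace (1 - theta 1%nat + (theta 1%nat - 1)) with 0 by ring. apply exp_0. }
  unfold v1. fold E.
  destruct (V_hh (q*E) ltac:(nra)) as [Hh Hv]. unfold hh in Hh.
  set (v := V (q * E)) in *. set (eu := exp (v / (1 - v))) in *.
  assert (c * eu = q / v).
  { apply Rmult_eq_reg_r with v; [|lra]. replace (q / v * v) with q by (field; lra).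
    replace (c * eu * v) with (c * (v * eu)) by ring. rewrite Hh.
    replace (c * (q*E)) with (q * (c*E)) by ring. rewrite cE. ring. }
  rewrite H. field. repeat split; try lra. 
Qed.

Lemma UU_le : forall theta x y, 0 < x -> x <= y -> UU theta x <= UU theta y.
Proof.
  intros theta x y Hx Hxy. unfold UU, v1.
  assert (HE : 0 < exp (theta 1%nat - 1)) by apply exp_pos.
  pose proof (V_le (x * exp (theta 1%nat - 1)) (y * exp (theta 1%nat - 1)) ltac:(nra) ltac:(nra)).
  destruct (V_hh (x * exp (theta 1%nat - 1)) ltac:(nra)) as [_ B1].
  destruct (V_hh (y * exp (theta 1%nat - 1)) ltac:(nra)) as [_ B2].
  set (a := V (x * exp (theta 1%nat - 1))) in *. set (b := V (y * exp (theta 1%nat - 1))) in *.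
  cut (0 <= b / (1 - b) - a / (1 - a)); [lra|]. unfold Rdiv.
  replace (b * / (1 - b) - a * / (1 - a)) with ((b - a) / ((1-a)*(1-b))) by (field; lra).
  apply Rmult_le_pos; [lra|]. apply Rlt_le, Rinv_0_lt_compat. nra.
Qed.

Lemma UU_pos : forall theta x, 0 < x -> 0 < UU theta x.
Proof.
  intros theta x Hx. unfold UU, v1.
  assert (HE : 0 < exp (theta 1%nat - 1)) by apply exp_pos.
  destruct (V_hh (x * exp (theta 1%nat - 1)) ltac:(nra)) as [_ B1].
  apply Rdiv_lt_0_compat; lra.
Qed.

Lemma R_qc : forall theta a z b, 0 < a -> a <= z -> z <= b ->
  Rfun theta z <= Rmax (Rfun theta a) (Rfun theta b).
Proof.
  intros theta a z b Ha Haz Hzb.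
  rewrite !Rfun_SS by lra.
  apply SS_qc. apply exp_pos. apply UU_pos; lra.
  apply UU_le; lra. apply UU_le; lra.
Qed.

Theorem mainTheorem11 (n : nat) (theta : nat -> R)
  (hn : (2 <= n)%nat)
  (hmono : forall i j : nat, (1 <= i)%nat -> (i <= j)%nat -> (j <= n)%nat -> theta j <= theta i)
  (hnonneg : forall i : nat, (1 <= i)%nat -> (i <= n)%nat -> 0 <= theta i) :
  quasi_convex_on (Rfun theta) (qbar0 theta (1 :: 2 :: nil)%nat) (qbar0 theta (1 :: nil)%nat).
Proof.
  intros x y lam Hx Hy Hl.
  pose proof (qbar0_pos theta).
  destruct (Rle_or_lt x y) as [Hxy|Hxy].
  - apply R_qc; nra.
  - rewrite Rmax_comm. apply R_qc; nra.
Qed.
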